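(* Let $S$ be a set and let $P$ be a specific set of $S$-probabilities all of whose elements are varying. Then: (i) $P$ is complemented, i.e. $p\wedge p'=0$ for every $p\in P$, and hence $P$ (with the pointwise order and $p\mapsto p'=1-p$) is an orthoposet; (ii) if $p,q\in P$ and $p\perp q$, then $p\wedge q=0$; (iii) $P$ is a generalized field of events (GFE).
   Context: An $S$-probability is a function $p\colon S\to[0,1]$. A set $P$ of $S$-probabilities is partially ordered by the pointwise order of functions; $0$ and $1$ denote the constant functions, $p':=1-p$, and $p+q$ denotes the pointwise sum. For $p,q\in P$ (with $0\in P$) one writes $p\wedge q=0$ (''$p$ and $q$ are disjoint'') if the only $x\in P$ with $x\le p$ and $x\le q$ is $x=0$. One writes $p\perp q$ (''orthogonal'') if $p\le q'=1-q$. A set $P$ of $S$-probabilities is specific if (1) $0,1\in P$; (2) $p\in P$ implies $1-p\in P$; (3) if $p,q\in P$ and $p\wedge q=0$ then $p+q\in P$. An $S$-probability $p$ is varying if either $p\in\{0,1\}$, or $p$ is neither $\le 1/2$ everywhere nor $\ge 1/2$ everywhere (i.e. if $p\le 1/2$ or $p\ge1/2$ pointwise, then $p=0$ or $p=1$). An orthoposet is a bounded poset with an antitone involution $'$ which is a complementation ($p\wedge p'=0$ and $p\vee p'=1$). A generalized field of events (GFE) is a set $P$ of $S$-probabilities satisfying (1), (2) and (4): if $p,q\in P$ and $p\perp q$ then $p+q\in P$. *)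

(* Defs.v *)
From Stdlib Require Import Reals.
Open Scope R_scope.

Definition Sprob {S : Type} (p : S -> R) : Prop := forall s, 0 <= p s <= 1.

Definition cst0 {S : Type} : S -> R := fun _ => 0.
Definition cst1 {S : Type} : S -> R := fun _ => 1.
Definition compl {S : Type} (p : S -> R) : S -> R := fun s => 1 - p s.
Definition fsum {S : Type} (p q : S -> R) : S -> R := fun s => p s + q s.
Definition fle {S : Type} (p q : S -> R) : Prop := forall s, p s <= q s.

(* p /\ q = 0 in P : the only x in P below p and q is 0 *)
Definition disj {S : Type} (P : (S -> R) -> Prop) (p q : S -> R) : Prop :=
  forall x, P x -> fle x p -> fle x q -> x = cst0.

Definition orth {S : Type} (p q : S -> R) : Prop := fle p (compl q).

Definition specific {S : Type} (P : (S -> R) -> Prop) : Prop :=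
  (forall p, P p -> Sprob p) /\
  P cst0 /\ P cst1 /\
  (forall p, P p -> P (compl p)) /\
  (forall p q, P p -> P q -> disj P p q -> P (fsum p q)).

Definition varying {S : Type} (p : S -> R) : Prop :=
  ((forall s, p s <= 1/2) \/ (forall s, p s >= 1/2)) -> p = cst0 \/ p = cst1.

(* P, with the pointwise order, bounds 0,1 and p' = 1-p, is an orthoposet:
   bounded poset, ' is an antitone involution on P, and a complementation
   (p /\ p' = 0 and p \/ p' = 1, meet/join taken in P). *)
Definition orthoposet {S : Type} (P : (S -> R) -> Prop) : Prop :=
  (forall p, P p -> fle p p) /\
  (forall p q, P p -> P q -> fle p q -> fle q p -> p = q) /\
  (forall p q r, P p -> P q -> P r -> fle p q -> fle q r -> fle p r) /\
  P cst0 /\ P cst1 /\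
  (forall p, P p -> fle cst0 p /\ fle p cst1) /\
  (forall p, P p -> P (compl p)) /\
  (forall p q, P p -> P q -> fle p q -> fle (compl q) (compl p)) /\
  (forall p, P p -> compl (compl p) = p) /\
  (forall p, P p -> disj P p (compl p)) /\
  (forall p, P p -> forall x, P x -> fle p x -> fle (compl p) x -> x = cst1).

Definition GFE {S : Type} (P : (S -> R) -> Prop) : Prop :=
  (forall p, P p -> Sprob p) /\
  P cst0 /\ P cst1 /\
  (forall p, P p -> P (compl p)) /\
  (forall p q, P p -> P q -> orth p q -> P (fsum p q)).

(* Main.v *)
Require Import Defs.
From Stdlib Require Import Reals Lra FunctionalExtensionality.
Open Scope R_scope.

Lemma compl_disj (S : Type) (P : (S -> R) -> Prop) :
  specific P -> (forall p, P p -> varying p) ->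
  forall p, P p -> disj P p (compl p).
Proof.
  intros [HS _] Hv p Hp x Hx H1 H2.
  unfold fle, compl in *.
  destruct (Hv x Hx) as [E|E].
  - left. intro s. specialize (H1 s). specialize (H2 s). lra.
  - exact E.
  - apply functional_extensionality. intro s.
    specialize (H1 s). specialize (H2 s). rewrite E in H1, H2.
    unfold cst1 in *. lra.
Qed.

Theorem proposition2p2 (S : Type) (P : (S -> R) -> Prop) :
  specific P ->
  (forall p, P p -> varying p) ->
  ((forall p, P p -> disj P p (compl p)) /\ orthoposet P) /\
  (forall p q, P p -> P q -> orth p q -> disj P p q) /\
  GFE P.
Proof.
  intros Hsp Hv.
  pose proof (compl_disj S P Hsp Hv) as HD.
  destruct Hsp as (HS & H0 & H1 & Hc & Hsum).
  assert (Horth : forall p q, P p -> P q -> orth p q -> disj P p q).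
  { intros p q Hp Hq Ho x Hx Hxp Hxq.
    apply (HD q Hq x Hx Hxq). intro s. specialize (Hxp s). specialize (Ho s). lra. }
  split; [split; [exact HD|] | split; [exact Horth|]].
  - unfold orthoposet. unfold fle, compl.
    split. { intros; lra. }
    split. { intros p q _ _ A B. apply functional_extensionality. intro s.
             specialize (A s); specialize (B s); lra. }
    split. { intros p q r _ _ _ A B s. specialize (A s); specialize (B s); lra. }
    split. exact H0. split. exact H1.
    split. { intros p Hp. pose proof (HS p Hp). unfold Sprob, cst0, cst1 in *.
             split; intro s; specialize (H s); lra. }
    split. exact Hc.
    split. { intros p q _ _ A s. specialize (A s); lra. }
    split. { intros p _. apply functional_extensionality. intro s. lra. }
    split. exact HD.
    intros p Hp x Hx A B.
    assert (E : compl x = cst0).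
    { apply (HD p Hp (compl x) (Hc x Hx)); intro s; unfold compl;
      specialize (A s); specialize (B s); lra. }
    apply functional_extensionality. intro s.
    assert (E' := equal_f E s). unfold compl, cst0, cst1 in *. lra.
  - unfold GFE. split; [exact HS|]. split; [exact H0|]. split; [exact H1|]. split; [exact Hc|].
    intros p q Hp Hq Ho. apply Hsum; auto.
Qed.
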